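(* Let $G=(V,E)$ be a directed graph with $n=|V|$, $h>0$, and $1\le\alpha\le\log n$. For any vertices $u,v$ with $\overline{\mathrm{dist}}(u,v)\le 2h$, $$\sum_{b\in V}\min\{M_h^\alpha(u,b),M_h^\alpha(v,b)\}\ge 2^{-8\alpha}.$$
   Context: $G$ has positive integer edge lengths; $\mathrm{dist}$ is directed shortest-path distance and $\overline{\mathrm{dist}}(u,v)=\mathrm{dist}(u,v)+\mathrm{dist}(v,u)$. Exponential weights: $w_h^\alpha(u,v)=1$ if $u=v$; $=2^{-\alpha\overline{\mathrm{dist}}(u,v)/h}$ if $u\neq v$ and $\overline{\mathrm{dist}}(u,v)\le\frac{2h\log_2 n}{\alpha}$; $=0$ otherwise. $w_h^\alpha(u)=\sum_{b\in V}w_h^\alpha(u,b)$ and the mixing factor is $M_h^\alpha(u,v)=w_h^\alpha(u,v)/w_h^\alpha(u)$. *)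

(* Defs.v *)
From mathcomp Require Import all_boot all_order all_algebra.
From mathcomp Require Import all_classical all_reals all_analysis.
Set Implicit Arguments. Unset Strict Implicit. Unset Printing Implicit Defensive.
Import Order.TTheory GRing.Theory Num.Theory.
Local Open Scope classical_set_scope.
Local Open Scope ring_scope.

(* A directed graph on a finite vertex type V: edge relation E and edge lengths
   len (required to be positive integers on edges, see [pos_lengths]). *)
Definition pos_lengths (V : finType) (E : rel V) (len : V -> V -> nat) : Prop :=
  forall x y, E x y -> (0 < len x y)%N.

(* A walk from u to v: vertex sequence p following edges, starting after u, ending at v. *)
Definition walk (V : finType) (E : rel V) (u v : V) (p : seq V) : bool :=
  path E u p && (last u p == v).

Definition walk_len (V : finType) (len : V -> V -> nat) (u : V) (p : seq V) : nat :=
  sumn (pairmap len u p).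

Definition dist (R : realType) (V : finType) (E : rel V) (len : V -> V -> nat)
  (u v : V) : \bar R :=
  ereal_inf [set ((walk_len len u p)%:R)%:E | p in [set p | walk E u v p]].

Definition rdist (R : realType) (V : finType) (E : rel V) (len : V -> V -> nat)
  (u v : V) : \bar R :=
  (dist R E len u v + dist R E len v u)%E.

Definition log2 (R : realType) (x : R) : R := ln x / ln 2.

Definition wgt (R : realType) (V : finType) (E : rel V) (len : V -> V -> nat)
  (h alpha : R) (u v : V) : R :=
  if u == v then 1
  else if (rdist R E len u v <= (2 * h * log2 (#|V|%:R) / alpha)%:E)%E
       then (2 : R) `^ (- alpha * fine (rdist R E len u v) / h)
       else 0.

Definition wgt_tot (R : realType) (V : finType) (E : rel V) (len : V -> V -> nat)
  (h alpha : R) (u : V) : R :=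
  \sum_(b : V) wgt E len h alpha u b.

Definition mix (R : realType) (V : finType) (E : rel V) (len : V -> V -> nat)
  (h alpha : R) (u v : V) : R :=
  wgt E len h alpha u v / wgt_tot E len h alpha u.

(* Main.v *)
Require Import Defs.
From mathcomp Require Import all_boot all_order all_algebra.
From mathcomp Require Import all_classical all_reals all_analysis.
From mathcomp Require Import ring lra.
Import Order.TTheory GRing.Theory Num.Theory.
Local Open Scope ring_scope.
Set Implicit Arguments. Unset Strict Implicit.

Section D.
Variables (R : realType) (V : finType) (E : rel V) (len : V -> V -> nat).

Lemma dist_le (x y : V) p : walk E x y p ->
  (dist R E len x y <= ((walk_len len x p)%:R)%:E)%E.
Proof. by move=> w; apply: ereal_inf_lbound; exists p. Qed.

Lemma dist_cases (x y : V) :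
  dist R E len x y = +oo%E \/
  exists p, walk E x y p /\ dist R E len x y = ((walk_len len x p)%:R)%:E.
Proof.
have [ex|nex] := pselect (exists p, walk E x y p); last first.
  left; rewrite /dist; apply/ereal_inf_pinfty => z [p /= wp _].
  by exfalso; apply: nex; exists p.
right.
pose P := fun m => `[< exists p, walk E x y p /\ walk_len len x p = m >].
have exP : exists m, P m.
  by case: ex => p wp; exists (walk_len len x p); apply/asboolP; exists p.
case: (ex_minnP exP) => m /asboolP [p [wp lp]] mmin.
exists p; split => //; apply/eqP; rewrite eq_le dist_le //=.
apply: le_ereal_inf_tmp => z [q /= wq <-].
rewrite lee_fin ler_nat lp; apply: mmin; apply/asboolP; by exists q.
Qed.

Lemma dist_ge0 (x y : V) : (0 <= dist R E len x y)%E.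
Proof.
by case: (dist_cases x y) => [->|[p [_ ->]]]; rewrite ?leey // lee_fin.
Qed.

Lemma dist_triangle (x y z : V) :
  (dist R E len x z <= dist R E len x y + dist R E len y z)%E.
Proof.
case: (dist_cases x y) => [->|[p [wp ->]]].
  by rewrite addye ?leey // gt_eqF // (lt_le_trans _ (dist_ge0 y z)) // ltNy0.
case: (dist_cases y z) => [->|[q [wq ->]]].
  by rewrite addey ?leey.
have w : walk E x z (p ++ q).
  move: wp wq; rewrite /walk cat_path last_cat => /andP[-> /eqP ->] /andP[-> ->].
  done.
have := @dist_le x z (p ++ q) w.
rewrite /walk_len pairmap_cat sumn_cat natrD EFinD.
by move: wp => /andP[_ /eqP ->].
Qed.
End D.

Section W.
Variables (R : realType) (V : finType) (E : rel V) (len : V -> V -> nat).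

Lemma rdist_ge0 (x y : V) : (0 <= rdist R E len x y)%E.
Proof. by rewrite /rdist adde_ge0 // dist_ge0. Qed.

Lemma rdistC (x y : V) : rdist R E len x y = rdist R E len y x.
Proof. by rewrite /rdist addeC. Qed.

Lemma rdist_triangle (x y z : V) :
  (rdist R E len x z <= rdist R E len x y + rdist R E len y z)%E.
Proof.
apply: (le_trans (leeD (dist_triangle R E len x y z) (dist_triangle R E len z y x))).
by rewrite (addeC (dist R E len z y)) addeACA.
Qed.

Lemma fin_of (e : \bar R) (r : R) : (0 <= e)%E -> (e <= r%:E)%E -> e = (fine e)%:E.
Proof. by case: e. Qed.

Lemma fine_le (e : \bar R) (r : R) : (0 <= e)%E -> (e <= r%:E)%E -> fine e <= r.
Proof. by case: e. Qed.

Lemma powR2_le (x y : R) : x <= y -> (2:R) `^ x <= (2:R) `^ y.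
Proof. by move=> xy; apply: (ler_powR _ xy); rewrite ler1n. Qed.

Lemma powR2_le1 (x : R) : x <= 0 -> (2:R) `^ x <= 1.
Proof.
by move=> x0; rewrite -[leRHS](powRr0 2); apply: powR2_le.
Qed.

Variables (h alpha : R).
Hypotheses (hpos : 0 < h) (a1 : 1 <= alpha)
  (aL : alpha <= log2 (#|V|%:R : R)).

Lemma wgt_ge0 x y : 0 <= wgt E len h alpha x y.
Proof. by rewrite /wgt; case: ifP => // _; case: ifP => // _; exact: powR_ge0. Qed.

Lemma wgt_le1 x y : wgt E len h alpha x y <= 1.
Proof.
rewrite /wgt; case: ifP => // _; case: ifP => // _.
apply: powR2_le1.
have := fine_ge0 (rdist_ge0 x y).
set r := fine _ => r0.
rewrite !mulNr oppr_le0 divr_ge0 ?mulr_ge0 ?(ltW hpos) //.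
exact: le_trans ler01 a1.
Qed.

Lemma twoh_le_D : 2 * h <= 2 * h * log2 (#|V|%:R) / alpha.
Proof.
have a0 : 0 < alpha by apply: (lt_le_trans _ a1).
rewrite -mulrA -[leLHS](mulr1 (2 * h)) ler_pM2l ?mulr_gt0 // ler_pdivlMr // mul1r //.
Qed.

Lemma wgt_lb x y : (rdist R E len x y <= (2 * h)%:E)%E ->
  (2:R) `^ (- (2 * alpha)) <= wgt E len h alpha x y.
Proof.
move=> H; rewrite /wgt; case: ifP => _.
  apply: powR2_le1; rewrite oppr_le0 mulr_ge0 //; by apply: (le_trans _ a1).
rewrite (le_trans H) ?lee_fin ?twoh_le_D //.
apply: powR2_le.
have {}H := fine_le (rdist_ge0 x y) H.
have a0 : 0 < alpha by apply: (lt_le_trans _ a1).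
rewrite !mulNr lerN2 ler_pdivrMr //. by rewrite [2 * alpha * h]mulrAC mulrC ler_pM2r.
Qed.

Lemma wgt_pt x y b : (rdist R E len x y <= (2 * h)%:E)%E ->
  (2:R) `^ (- (2 * alpha)) * wgt E len h alpha x b
    - (2:R) `^ (2 * alpha - 2 * log2 (#|V|%:R : R)) <= wgt E len h alpha y b.
Proof.
move=> H.
have a0 : 0 < alpha by apply: (lt_le_trans _ a1).
set L := log2 _.
set t := (2:R) `^ (- (2 * alpha)).
set eps := (2:R) `^ (2 * alpha - 2 * L).
have t1 : t <= 1 by apply: powR2_le1; rewrite oppr_le0 mulr_ge0 // ltW.
have t0 : 0 <= t by apply: powR_ge0.
have e0 : 0 <= eps by apply: powR_ge0.
case: (eqVneq b y) => [->|bny].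
  rewrite {2}/wgt eqxx.
  have := wgt_le1 x y; have := wgt_ge0 x y; nra.
case: (eqVneq b x) => [->|bnx].
  rewrite {1}/wgt eqxx mulr1.
  have := @wgt_lb y x; rewrite rdistC -/t => /(_ H); lra.
rewrite {1}/wgt eq_sym (negbTE bnx).
case: ifP => Hb; last first.
  by rewrite mulr0 sub0r (le_trans _ (wgt_ge0 _ _)) // oppr_le0.
have Hr := fin_of (rdist_ge0 x b) Hb.
set rho := fine (rdist R E len x b) in Hr *.
set D := 2 * h * L / alpha in Hb.
have rD : rho <= D by rewrite -lee_fin -Hr.
have Dv : alpha * D = 2 * h * L.
  by rewrite /D; field; rewrite gt_eqF.
case: (lerP rho (D - 2 * h)) => rho_le.
  have Hyb : (rdist R E len y b <= (2 * h + rho)%:E)%E.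
    apply: (le_trans (rdist_triangle y x b)).
    by rewrite Hr EFinD leeD // rdistC.
  have HybD : (rdist R E len y b <= D%:E)%E.
    by apply: (le_trans Hyb); rewrite lee_fin; lra.
  rewrite /wgt eq_sym (negbTE bny) HybD.
  have Hs := fine_le (rdist_ge0 y b) Hyb.
  set sig := fine (rdist R E len y b) in Hs *.
  apply: (@le_trans _ _ (t * (2:R) `^ (- alpha * rho / h))).
    by rewrite lerBlDr lerDl.
  rewrite /t -powRD; last by apply/implyP => _; rewrite pnatr_eq0.
  apply: powR2_le.
  have e1 : alpha * sig / h <= alpha * (2 * h + rho) / h.
    by rewrite ler_pM2r ?invr_gt0 // ler_pM2l.
  have e2 : alpha * (2 * h + rho) / h = 2 * alpha + alpha * rho / h.
    by field; rewrite gt_eqF.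
  rewrite !mulNr; lra.
have : (2:R) `^ (- alpha * rho / h) <= eps.
  rewrite /eps; apply: powR2_le.
  have e1 : alpha * (D - 2 * h) / h <= alpha * rho / h.
    by rewrite ler_pM2r ?invr_gt0 // ler_pM2l // ltW.
  have e2 : alpha * (D - 2 * h) / h = 2 * L - 2 * alpha.
    rewrite mulrBr Dv; field; by rewrite gt_eqF.
  rewrite !mulNr; lra.
have := wgt_ge0 y b.
have := powR_ge0 2 (- alpha * rho / h).
nra.
Qed.
End W.

Section M.
Variables (R : realType) (V : finType) (E : rel V) (len : V -> V -> nat).
Variables (h alpha : R).
Hypotheses (hpos : 0 < h) (a1 : 1 <= alpha)
  (aL : alpha <= log2 (#|V|%:R : R)).

Lemma W_ge1 x : 1 <= wgt_tot E len h alpha x.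
Proof.
rewrite /wgt_tot (bigD1 x) //= {1}/wgt eqxx lerDl sumr_ge0 // => i _.
exact: wgt_ge0.
Qed.

Lemma W_le_n x : wgt_tot E len h alpha x <= #|V|%:R.
Proof.
apply: (@le_trans _ _ (\sum_(i : V) (1:R))).
  by apply: ler_sum => i _; exact: wgt_le1.
by rewrite sumr_const.
Qed.

Lemma mix_ge0 x y : 0 <= mix E len h alpha x y.
Proof.
rewrite /mix divr_ge0 ?wgt_ge0 //.
exact: le_trans ler01 (W_ge1 x).
Qed.

Lemma n_pow : (#|V|%:R : R) = (2:R) `^ (log2 (#|V|%:R : R)).
Proof.
have n0 : (0 < #|V|)%N.
  move: aL; case: (posnP #|V|) => // ->.
  rewrite /log2 ln0 // mul0r => /(lt_le_trans (lt_le_trans ltr01 a1)).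
  by rewrite ltxx.
have l2 : ln (2:R) != 0 by rewrite gt_eqF // ln_gt0 // ltr1n.
rewrite /powR pnatr_eq0 /= /log2 divfK // lnK //.
by rewrite posrE ltr0n.
Qed.

End M.

Unset Implicit Arguments.
Set Strict Implicit.

Theorem lemma3p12 (R : realType) (V : finType) (E : rel V) (len : V -> V -> nat)
  (h alpha : R) (u v : V) :
  pos_lengths E len ->
  0 < h ->
  1 <= alpha -> alpha <= log2 (#|V|%:R) ->
  (rdist R E len u v <= (2 * h)%:E)%E ->
  (2 : R) `^ (- (8 * alpha)) <=
    \sum_(b : V) Num.min (mix E len h alpha u b) (mix E len h alpha v b).
Proof.
move=> _ hpos a1 aL Huv.
have a0 : 0 < alpha by apply: (lt_le_trans _ a1).
have nP := n_pow a1 aL.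
set n := (#|V|%:R : R) in nP aL *.
set L := log2 n in nP aL *.
set t := (2:R) `^ (- (2 * alpha)).
set X := (2:R) `^ (- (8 * alpha)).
have t0 : 0 <= t by apply: powR_ge0.
have X0 : 0 <= X by apply: powR_ge0.
have two0 : (2:R) != 0 by rewrite pnatr_eq0.
have pD : forall r s : R, (2:R) `^ (r + s) = (2:R) `^ r * (2:R) `^ s.
  by move=> r s; rewrite powRD //; apply/implyP.
have Wu1 := W_ge1 E len h alpha u.
have Wv1 := W_ge1 E len h alpha v.
have Wun := W_le_n E len hpos a1 u.
have Wvn := W_le_n E len hpos a1 v.
set Wu := wgt_tot E len h alpha u in Wu1 Wun *.
set Wv := wgt_tot E len h alpha v in Wv1 Wvn *.
have Huv' : (rdist R E len v u <= (2 * h)%:E)%E by rewrite rdistC.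
case: (lerP L (6 * alpha)) => HL.
  (* single term b = u *)
  have Xn : X * n <= t.
    rewrite nP /X -pD; apply: powR2_le; lra.
  have key : forall a W, t <= a -> 0 < W -> W <= n -> X <= a / W.
    move=> a W ta W0 Wn; rewrite ler_pdivlMr //.
    have : X * W <= X * n by rewrite ler_wpM2l.
    lra.
  rewrite (bigD1 u) //=.
  apply: (@le_trans _ _ (Num.min (mix E len h alpha u u) (mix E len h alpha v u))).
    rewrite le_min; apply/andP; split.
      rewrite /mix {1}/wgt eqxx -/Wu; apply: key => //; last lra.
      by apply: powR2_le1; rewrite oppr_le0 mulr_ge0 // ltW.
    rewrite /mix -/Wv; apply: key; [exact: wgt_lb | lra | done].
  rewrite lerDl sumr_ge0 // => i _.
  by rewrite le_min !mix_ge0.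
set eps := (2:R) `^ (2 * alpha - 2 * L).
have e0 : 0 <= eps by apply: powR_ge0.
have t2 : (2:R) `^ (- (4 * alpha)) = t * t.
  by rewrite /t -pD; f_equal; lra.
have Xt : X = t * t * (t * t).
  by rewrite -t2 -pD /X; f_equal; lra.
have en : eps * n <= t * t.
  by rewrite nP -pD -t2; apply: powR2_le; lra.
have t4 : t <= 1 / 4.
  have -> : (1 / 4 : R) = (2:R) `^ (- 2%:R).
    by rewrite powR_invn // div1r expr2 -natrM.
  by apply: powR2_le; lra.
set S := Wu + Wv.
have S2 : 2 <= S by rewrite /S; lra.
have S0 : 0 < S by lra.
pose a b := wgt E len h alpha u b.
pose c b := wgt E len h alpha v b.
have pt : forall b, (t * (a b + c b) / 2 - eps) / S <=
    Num.min (mix E len h alpha u b) (mix E len h alpha v b).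
  move=> b.
  have h1 := wgt_pt hpos a1 aL b Huv.
  have h2 := wgt_pt hpos a1 aL b Huv'.
  rewrite -/t -/L -/eps -/(a b) -/(c b) in h1 h2.
  have a0' : 0 <= a b by apply: wgt_ge0.
  have c0' : 0 <= c b by apply: wgt_ge0.
  have ta : t * a b <= a b by rewrite ler_piMl //; lra.
  have tc : t * c b <= c b by rewrite ler_piMl //; lra.
  rewrite le_min; apply/andP; split; rewrite /mix -/Wu -/Wv.
    apply: (@le_trans _ _ (a b / S)).
      by rewrite ler_pM2r ?invr_gt0 //; lra.
    by rewrite ler_wpM2l // lef_pV2 ?posrE //; [rewrite /S; lra | lra].
  apply: (@le_trans _ _ (c b / S)).
    by rewrite ler_pM2r ?invr_gt0 //; lra.
  by rewrite ler_wpM2l // lef_pV2 ?posrE //; [rewrite /S; lra | lra].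
apply: (le_trans _ (ler_sum _ (fun b _ => pt b))).
have -> : \sum_(b : V) (t * (a b + c b) / 2 - eps) / S =
    (t * S / 2 - eps * n) / S.
  rewrite -mulr_suml; congr (_ * _).
  rewrite sumrB sumr_const -mulr_suml -mulr_sumr big_split /= mulr_natr.
  by [].
rewrite ler_pdivlMr //.
have tt : t * t <= t / 4 by nra.
have tt0 : 0 <= t * t by nra.
have tt16 : t * t <= 1 / 16 by nra.
have t44 : t * t * (t * t) <= t * t * (1 / 16) by rewrite ler_wpM2l.
have k : t * t * (t * t) <= t / 2 - t * t / 2 by lra.
have : t * t * (t * t) * S <= (t / 2 - t * t / 2) * S by rewrite ler_pM2r.
rewrite Xt.
nra.
Qed.
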